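(* Let $E$ be a nonzero real Banach space, $f_0\colon E\times E^*\to\,]{-}\infty,\infty]$ proper, convex and lower semicontinuous, $z^{**}\in E^{**}$ with $f_0^{**}(z^{**},0)\le0$, and $z^*\in E^*$. Then for all $n\in\mathbb N$ there exists $(x_n,x_n^* )\in E\times E^*$ such that $f_0(x_n,x_n^* )\le1/n^2$, $\|x_n\|\le\|z^{**}\|+1/n^2$, $\|x_n^*\|\le1/n^2$ and $|\langle x_n,z^*\rangle-\langle z^*,z^{**}\rangle|\le1/n^2$.
   Context: $(E\times E^* )^*$ is identified with $E^*\times E^{**}$ via $\langle (x,x^* ),(y^*,y^{**})\rangle=\langle x,y^*\rangle+\langle x^*,y^{**}\rangle$, so $(E\times E^* )^{**}$ is identified with $E^{**}\times E^{***}$; $f_0^*$ is the Fenchel conjugate on $E^*\times E^{**}$ and $f_0^{**}(x^{**},x^{***})=\sup_{(y^*,y^{**})}[\langle y^*,x^{**}\rangle+\langle y^{**},x^{***}\rangle-f_0^*(y^*,y^{**})]$. *)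

(* Defs.v *)
From HB Require Import structures.
From mathcomp Require Import all_boot all_order all_algebra.
From mathcomp Require Import all_classical all_reals all_analysis.
Set Implicit Arguments. Unset Strict Implicit. Unset Printing Implicit Defensive.
Import Order.TTheory GRing.Theory Num.Theory.
Import numFieldNormedType.Exports.
Local Open Scope classical_set_scope.
Local Open Scope ring_scope.

Section Duality.
Variables (R : realType) (E : normedModType R).

Definition is_dual (phi : E -> R) : Prop :=
  (forall (a : R) (x y : E), phi (a *: x + y) = a * phi x + phi y) /\ continuous phi.

Definition dnorm (phi : E -> R) : R :=
  sup [set `|phi x| | x in [set x : E | `|x| <= 1]].

Definition is_bidual (z : (E -> R) -> R) : Prop :=
  (forall (a : R) (phi psi : E -> R), is_dual phi -> is_dual psi ->
      z (fun x => a * phi x + psi x) = a * z phi + z psi) /\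
  exists M : R, forall phi, is_dual phi -> `|z phi| <= M * dnorm phi.

Definition bnorm (z : (E -> R) -> R) : R :=
  sup [set `|z phi| | phi in [set phi | is_dual phi /\ dnorm phi <= 1]].

(* f : E x E^* -> ]-oo, +oo] ; only its values on E x E^* matter  *)
Definition proper_fun (f : E -> (E -> R) -> \bar R) : Prop :=
  (forall x phi, is_dual phi -> f x phi != -oo%E) /\
  (exists x phi, is_dual phi /\ f x phi != +oo%E).

Definition convex_fun (f : E -> (E -> R) -> \bar R) : Prop :=
  forall (x : E) phi (y : E) psi (t : R), is_dual phi -> is_dual psi -> 0 <= t <= 1 ->
    (f (t *: x + (1 - t) *: y)%R (fun u => t * phi u + (1 - t) * psi u)%R
       <= t%:E * f x phi + (1 - t)%:E * f y psi)%E.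

Definition lsc_fun (f : E -> (E -> R) -> \bar R) : Prop :=
  forall (x : E) phi, is_dual phi -> forall r : R, (r%:E < f x phi)%E ->
    exists2 d : R, 0 < d & forall (y : E) psi, is_dual psi ->
      `|y - x| < d -> dnorm (fun u => psi u - phi u) < d -> (r%:E < f y psi)%E.

Definition fconj (f : E -> (E -> R) -> \bar R) (ys : E -> R) (yss : (E -> R) -> R)
  : \bar R :=
  ereal_sup [set v | exists x phi, is_dual phi /\
                       v = ((ys x + yss phi)%:E - f x phi)%E].

Definition fbiconj (f : E -> (E -> R) -> \bar R) (xss : (E -> R) -> R)
  (xsss : ((E -> R) -> R) -> R) : \bar R :=
  ereal_sup [set v | exists ys yss, is_dual ys /\ is_bidual yss /\
                       v = ((xss ys + xsss yss)%:E - fconj f ys yss)%E].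

End Duality.

(* Main.v *)
Require Import Defs.
From HB Require Import structures.
From mathcomp Require Import all_boot all_order all_algebra.
From mathcomp Require Import all_classical all_reals all_analysis.
From mathcomp Require Import ring lra.
Import Order.TTheory GRing.Theory Num.Theory.
Import numFieldNormedType.Exports.
Local Open Scope classical_set_scope.
Local Open Scope ring_scope.

Section HBsec.
Context (R : realType) (V : lmodType R) (S : set V) (P : V -> R).
Hypothesis S0 : S 0.
Hypothesis Slin : forall a v w, S v -> S w -> S (a *: v + w).
Hypothesis Pconv : forall v w t, S v -> S w -> 0 <= t <= 1 ->
  P (t *: v + (1 - t) *: w) <= t * P v + (1 - t) * P w.
Hypothesis P0 : 0 <= P 0.

Definition good (G : set (V * R)) : Prop :=
  [/\ forall v a b, G (v, a) -> G (v, b) -> a = b,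
      forall v a w b t, G (v, a) -> G (w, b) -> G (t *: v + w, t * a + b) &
      forall v a, G (v, a) -> S v /\ a <= P v].

Lemma good_chain (F : set (set (V * R))) : F `<=` good -> total_on F subset ->
  good (\bigcup_(X in F) X).
Proof.
move=> Fg tot; split.
- move=> v a b [X FX Xa] [Y FY Yb].
  have [XY|YX] := tot X Y FX FY.
  + by have [h _ _] := Fg Y FY; apply: h (XY _ Xa) Yb.
  + by have [h _ _] := Fg X FX; apply: h Xa (YX _ Yb).
- move=> v a w b t [X FX Xa] [Y FY Yb].
  have [XY|YX] := tot X Y FX FY.
  + by exists Y => //; have [_ h _] := Fg Y FY; apply: h (XY _ Xa) Yb.
  + by exists X => //; have [_ h _] := Fg X FX; apply: h Xa (YX _ Yb).
- by move=> v a [X FX Xa]; have [_ _ h] := Fg X FX; apply: h.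
Qed.

Lemma SB v w : S v -> S w -> S (v - w).
Proof.
move=> Sv Sw; rewrite addrC -scaleN1r; apply: Slin => //.
Qed.

Lemma SZ a v : S v -> S (a *: v).
Proof. by move=> Sv; rewrite -[_ *: _]addr0; apply: Slin. Qed.

Lemma SD v w : S v -> S w -> S (v + w).
Proof. by move=> Sv Sw; rewrite -[v]scale1r; apply: Slin. Qed.
Arguments SB {v w}. Arguments SZ a {v}. Arguments SD {v w}.

Lemma HB_convex : exists L : V -> R,
  (forall a v w, S v -> S w -> L (a *: v + w) = a * L v + L w) /\
  (forall v, S v -> L v <= P v).
Proof.
have [A [gA maxA]] := Zorn_bigcup good_chain.
have A00 : A (0, 0).
  have [[[v a] Az]|nA] := pselect (exists z, A z).
    case: gA => _ h _; have := h v a v a (-1) Az Az.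
    by rewrite scaleN1r addNr mulN1r addNr.
  exfalso; apply: (maxA [set ((0 : V), (0 : R))]).
    split; first by move=> z Az; exfalso; apply: nA; exists z.
    by move=> /(_ (0, 0) erefl) Az; apply: nA; exists (0, 0).
  split.
  - by move=> v a b [_ ->] [_ ->].
  - move=> v a w b t [-> ->] [-> ->].
    by rewrite scaler0 addr0 mulr0 addr0.
  - by move=> v a [-> ->].
case: gA => gfun glin gdom.
have claim : forall y, S y -> exists a, A (y, a).
  move=> y Sy; apply: contrapT => ny.
  pose Cs := [set x | exists m g s, [/\ A (m, g), 0 < s &
                x = (g - P (m - s *: y)) / s]].
  have key m g m' g' s t : A (m, g) -> A (m', g') -> 0 < s -> 0 < t ->
      t * g' + s * g <= t * P (m' - s *: y) + s * P (m + t *: y).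
    move=> Am Am' s0 t0.
    have st0 : 0 < s + t by rewrite addr_gt0.
    pose l := t / (s + t).
    have l01 : 0 <= l <= 1.
      rewrite /l divr_ge0 ?(ltW s0) ?(ltW t0) ?(ltW st0) //= ler_pdivrMr // mul1r lerDr ltW //.
    have Aq : A (l *: m' + ((1 - l) *: m + 0), l * g' + ((1 - l) * g + 0)).
      by apply: (glin) => //; apply: (glin).
    have := (gdom _ _ Aq).2; rewrite !addr0.
    have -> : l *: m' + (1 - l) *: m =
        l *: (m' - s *: y) + (1 - l) *: (m + t *: y).
      rewrite scalerBr scalerDr !scalerA.
      have -> : (1 - l) * t = l * s.
        rewrite /l; field; exact: lt0r_neq0.
      by rewrite addrACA addNr addr0.
    move=> h1.
    have h2 := le_trans h1 (Pconv _ _ _ (SB (gdom _ _ Am').1 (SZ s Sy))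
                                  (SD (gdom _ _ Am).1 (SZ t Sy)) l01).
    have E a b : (s + t) * (l * a + (1 - l) * b) = t * a + s * b.
      by rewrite /l; field; exact: lt0r_neq0.
    by rewrite -!E ler_wpM2l // ltW.
  have Cs0 : Cs !=set0.
    by exists ((0 - P (0 - 1 *: y)) / 1), 0, 0, 1.
  pose c := sup Cs.
  have divle (a b s t : R) : 0 < s -> 0 < t -> a * t <= b * s -> a / s <= b / t.
    move=> s0 t0 h; rewrite ler_pdivrMr // mulrAC ler_pdivlMr //.
  have cub m g t : A (m, g) -> 0 < t -> c <= (P (m + t *: y) - g) / t.
    move=> Am t0; apply: ge_sup => // x [m' [g' [s [Am' s0 ->]]]].
    apply: divle => //; have := key _ _ _ _ _ _ Am Am' s0 t0; lra.
  have supCs : has_sup Cs.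
    split => //; exists ((P (0 + 1 *: y) - 0) / 1) => x [m' [g' [s [Am' s0 ->]]]].
    apply: divle => //; have := key _ _ _ _ _ _ A00 Am' s0 ltr01; lra.
  have clb m g s : A (m, g) -> 0 < s -> (g - P (m - s *: y)) / s <= c.
    by move=> Am s0; apply: sup_upper_bound => //; exists m, g, s.
  pose B := [set z | exists m g t, A (m, g) /\ z = (m + t *: y, g + t * c)].
  apply: (maxA B).
    split.
      by move=> [m g] Am; exists m, g, 0; rewrite scale0r addr0 mul0r addr0.
    move=> BA; apply: ny; exists c; apply: BA; exists 0, 0, 1.
    by rewrite scale1r add0r mul1r add0r.
  split.
  - move=> v a b [m [g [t [Am [-> ->]]]]] [m' [g' [t' [Am' []]]]] Ev ->.
    have [tt'|tt'] := eqVneq t t'.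
      move: Ev; rewrite tt' => /addIr mm'; rewrite mm' in Am.
      by rewrite (gfun _ _ _ Am Am').
    exfalso; apply: ny.
    have Ay := glin _ _ _ _ ((t - t')^-1) (glin _ _ _ _ (-1) Am Am') A00.
    suff E : (t - t')^-1 *: (-1 *: m + m') = y.
      by move: Ay; rewrite addr0 E => Ay; eexists; exact: Ay.
    have Ev' : m' - m = (t - t') *: y.
      by apply/eqP; rewrite subr_eq scalerBl addrC addrA Ev addrK.
    by rewrite scaleN1r (addrC (- m)) Ev' scalerA mulVf ?scale1r // subr_eq0.
  - move=> v a w b r [m [g [t [Am [-> ->]]]]] [m' [g' [t' [Am' [-> ->]]]]].
    exists (r *: m + m'), (r * g + g'), (r * t + t'); split; first exact: glin.
    congr pair; last by ring.
    rewrite scalerDr scalerA scalerDl !addrA; congr (_ + _).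
    by rewrite addrAC.
  - move=> v a [m [g [t [Am [-> ->]]]]]; have [Sm gP] := gdom _ _ Am.
    split; first exact: SD Sm (SZ t Sy).
    have [t0|t0|->] := ltgtP t 0; last by rewrite scale0r mul0r !addr0.
      have := clb m g (- t) Am; rewrite oppr_gt0 => /(_ t0).
      rewrite scaleNr opprK ler_pdivrMr ?oppr_gt0 //; nra.
    have := cub m g t Am t0; rewrite ler_pdivlMr //; nra.
pose L v := xget 0 [set a | A (v, a)].
have LA v : S v -> A (v, L v).
  by move=> Sv; exact: (@xgetPex R 0 [set a | A (v, a)] (claim v Sv)).
exists L; split.
  move=> a v w Sv Sw; apply: (gfun (a *: v + w)).
    exact: (LA _ (SD (SZ a Sv) Sw)).
  exact: glin (LA _ Sv) (LA _ Sw).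
by move=> v Sv; exact: (gdom _ _ (LA _ Sv)).2.
Qed.
End HBsec.

Section Sep.
Context (R : realType) (V : lmodType R) (S : set V) (N : V -> R) (K : set V).
Hypothesis S0 : S 0.
Hypothesis Slin : forall a v w, S v -> S w -> S (a *: v + w).
Hypothesis N0 : forall v, S v -> 0 <= N v.
Hypothesis NZ : forall a v, S v -> N (a *: v) <= `|a| * N v.
Hypothesis ND : forall v w, S v -> S w -> N (v + w) <= N v + N w.
Hypothesis KS : K `<=` S.
Hypothesis Kconv : forall a b t, K a -> K b -> 0 <= t <= 1 ->
  K (t *: a + (1 - t) *: b).
Hypothesis Kne : exists a, K a.
Hypothesis KN : forall a, K a -> 1 <= N a.

Let SZ' a {v} : S v -> S (a *: v).
Proof. by move=> Sv; rewrite -[_ *: _]addr0; apply: Slin. Qed.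
Let SD' {v w} : S v -> S w -> S (v + w).
Proof. by move=> Sv Sw; rewrite -[v]scale1r; apply: Slin. Qed.

Lemma separation : exists L : V -> R,
  [/\ (forall a v w, S v -> S w -> L (a *: v + w) = a * L v + L w),
      (forall v, S v -> L v <= N v) &
      (forall a, K a -> 1 <= L a)].
Proof.
pose Iv v := inf [set N (v + a) | a in K].
have Ine v : [set N (v + a) | a in K] !=set0.
  by case: Kne => a Ka; exists (N (v + a)), a.
have Ilb v : S v -> has_lbound [set N (v + a) | a in K].
  by move=> Sv; exists 0 => _ [a Ka <-]; apply: N0; apply: SD' => //; exact: KS.
have Iv_le v a : S v -> K a -> Iv v <= N (v + a).
  by move=> Sv Ka; apply: (ge_inf (Ilb v Sv)); exists a.
have Iv_ge v x : (forall a, K a -> x <= N (v + a)) -> x <= Iv v.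
  by move=> h; apply: lb_le_inf => // _ [a Ka <-]; exact: h.
pose P v := Iv v - 1.
have Pconv : forall v w t, S v -> S w -> 0 <= t <= 1 ->
    P (t *: v + (1 - t) *: w) <= t * P v + (1 - t) * P w.
  move=> v w t Sv Sw /andP[t0 t1].
  suff : Iv (t *: v + (1 - t) *: w) <= t * Iv v + (1 - t) * Iv w.
    rewrite /P; lra.
  apply/ler_addgt0Pr => e e0.
  have : Iv v < Iv v + e by rewrite ltrDl.
  move=> /(inf_lt (Ine v)) [_ [a Ka <-] ha].
  have : Iv w < Iv w + e by rewrite ltrDl.
  move=> /(inf_lt (Ine w)) [_ [b Kb <-] hb].
  have t01 : 0 <= t <= 1 by rewrite t0 t1.
  have Kab := Kconv _ _ _ Ka Kb t01.
  have Sa := KS _ Ka; have Sb := KS _ Kb.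
  apply: (le_trans (Iv_le _ _ (SD' (SZ' t Sv) (SZ' (1 - t) Sw)) Kab)).
  have -> : t *: v + (1 - t) *: w + (t *: a + (1 - t) *: b) =
            t *: (v + a) + (1 - t) *: (w + b) by rewrite !scalerDr addrACA.
  apply: (le_trans (ND _ _ (SZ' t (SD' Sv Sa)) (SZ' (1 - t) (SD' Sw Sb)))).
  have h1 := NZ t _ (SD' Sv Sa); have h2 := NZ (1 - t) _ (SD' Sw Sb).
  rewrite ger0_norm // in h1; rewrite ger0_norm ?subr_ge0 // in h2.
  have h3 : t * N (v + a) <= t * (Iv v + e) by rewrite ler_wpM2l // ltW.
  have h4 : (1 - t) * N (w + b) <= (1 - t) * (Iv w + e).
    by rewrite ler_wpM2l ?subr_ge0 // ltW.
  lra.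
have P0 : 0 <= P 0.
  by rewrite /P subr_ge0; apply: Iv_ge => a Ka; rewrite add0r; exact: KN.
have [L [Llin LP]] := @HB_convex R V S P S0 Slin Pconv P0.
have L0 : L 0 = 0.
  have := Llin 1 0 0 S0 S0; rewrite scale1r addr0 mul1r => h; lra.
have LN v : S v -> L (- v) = - L v.
  move=> Sv; have := Llin (-1) v 0 Sv S0.
  by rewrite addr0 scaleN1r L0 addr0 mulN1r.
have NN0 : N 0 = 0.
  apply/eqP; rewrite eq_le N0 // andbT.
  by have := NZ 0 _ S0; rewrite scale0r normr0 mul0r.
exists L; split => //; last first.
  move=> a Ka; have Sa := KS _ Ka.
  have Sna : S (- a) by rewrite -scaleN1r; exact: SZ'.
  have := LP _ Sna; rewrite LN // /P.
  have := Iv_le (- a) a Sna Ka; rewrite addNr NN0; lra.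
move=> v Sv; case: Kne => a0 Ka0.
have key k : 0 < k -> k * L v <= k * N v + (N a0 - 1).
  move=> k0; have Skv := SZ' k Sv.
  have := LP _ Skv; rewrite -[k *: v]addr0 Llin // L0 addr0 /P.
  have := Iv_le _ _ Skv Ka0.
  have := ND _ _ Skv (KS _ Ka0); have := NZ k _ Sv; rewrite gtr0_norm //; lra.
rewrite leNgt; apply/negP => lt.
pose k := (`|N a0 - 1| + 1) / (L v - N v).
have d0 : 0 < L v - N v by rewrite subr_gt0.
have k0 : 0 < k by rewrite divr_gt0 // ltr_wpDl.
have := key k k0.
have -> : k * L v = k * (L v - N v) + k * N v by ring.
rewrite /k mulfVK ?lt0r_neq0 //.
have := ler_norm (N a0 - 1); lra.
Qed.
End Sep.

Section Duals.
Context {R : realType} {E : normedModType R}.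
Implicit Types (phi psi chi : E -> R) (x y : E) (z : (E -> R) -> R).

Lemma dual0 {phi} : is_dual phi -> phi 0 = 0.
Proof. by case=> lin _; have := lin 1 0 0; rewrite scale1r addr0 mul1r => h; lra. Qed.

Lemma dualZ phi a x : is_dual phi -> phi (a *: x) = a * phi x.
Proof.
move=> hd; have := hd.1 a x 0; rewrite addr0 (dual0 hd) addr0 //.
Qed.

Lemma dualD phi x y : is_dual phi -> phi (x + y) = phi x + phi y.
Proof. by move=> hd; have := hd.1 1 x y; rewrite scale1r mul1r. Qed.

Lemma dualB phi x y : is_dual phi -> phi (x - y) = phi x - phi y.
Proof.
by move=> hd; rewrite dualD // -scaleN1r dualZ // mulN1r.
Qed.

Lemma bound_cont (u : E -> R) k :
  (forall a x y, u (a *: x + y) = a * u x + u y) ->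
  (forall x, `|u x| <= k * `|x|) -> is_dual u.
Proof.
move=> lin bd; split => // x.
have u0 : u 0 = 0 by have := lin 1 0 0; rewrite scale1r addr0 mul1r => h; lra.
have uB (z w : E) : u (z - w) = u z - u w.
  have := lin (-1) w z; rewrite scaleN1r mulN1r addrC => ->; by rewrite addrC.
apply/cvgrPdist_lt => e e0; apply/nbhs_normP.
exists (e / (`|k| + 1)) => [|y /= hy]; first by rewrite /= divr_gt0 // ltr_wpDl.
rewrite -uB; apply: (le_lt_trans (bd _)).
have k1 : 0 < `|k| + 1 by rewrite ltr_wpDl.
rewrite ltr_pdivlMr // in hy.
have : k * `|x - y| <= (`|k| + 1) * `|x - y|.
  by rewrite ler_wpM2r // (le_trans (ler_norm k)) // lerDl.
nra.
Qed.

Lemma dual_bound {phi} : is_dual phi ->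
  exists2 M, 0 < M & forall x, `|phi x| <= M * `|x|.
Proof.
move=> hd; have := hd.2 0; move/cvgrPdist_lt => /(_ 1 ltr01).
move=> /nbhs_norm0P [d /= d0 hdd]; exists (2 / d); first by rewrite divr_gt0.
move=> x; have [->|x0] := eqVneq x 0; first by rewrite (dual0 hd) !normr0 mulr0.
have nx : 0 < `|x| by rewrite normr_gt0.
pose l := d / (2 * `|x|).
have l0 : 0 < l by rewrite /l divr_gt0 // mulr_gt0.
have hx : `|l *: x| < d.
  rewrite normrZ gtr0_norm // /l.
  have -> : d / (2 * `|x|) * `|x| = d / 2 by field; rewrite ?lt0r_neq0.
  by rewrite gtr_pMr // invf_lt1 // ltr1n.
have := hdd _ hx; rewrite /= (dual0 hd) sub0r normrN dualZ // normrM (gtr0_norm l0).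
rewrite /l mulrAC ltr_pdivrMr ?mulr_gt0 // mul1r => h.
rewrite mulrAC ler_pdivlMr //; rewrite mulrC; exact: ltW.
Qed.

Lemma dset_ne phi : [set `|phi x| | x in [set x : E | `|x| <= 1]] !=set0.
Proof. by exists `|phi 0|, 0 => //=; rewrite normr0. Qed.

Lemma dset_ub {phi} : is_dual phi ->
  has_ubound [set `|phi x| | x in [set x : E | `|x| <= 1]].
Proof.
move=> hd; have [M M0 hM] := dual_bound hd; exists M => _ [x /= x1 <-].
by apply: (le_trans (hM x)); rewrite ler_piMr // ltW.
Qed.

Lemma dnorm_ub {phi} x : is_dual phi -> `|x| <= 1 -> `|phi x| <= dnorm phi.
Proof. by move=> hd x1; apply: (ub_le_sup (dset_ub hd)); exists x. Qed.

Lemma dnorm_ge0 {phi} : is_dual phi -> 0 <= dnorm phi.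
Proof.
by move=> hd; apply: le_trans (dnorm_ub 0 hd _); rewrite ?normr0.
Qed.

Lemma dnormP {phi} x : is_dual phi -> `|phi x| <= dnorm phi * `|x|.
Proof.
move=> hd; have [->|x0] := eqVneq x 0.
  by rewrite (dual0 hd) !normr0 mulr0.
have nx : 0 < `|x| by rewrite normr_gt0.
have := dnorm_ub (`|x|^-1 *: x) hd.
have nxi : `| `|x|^-1 | = `|x|^-1 by rewrite ger0_norm // invr_ge0.
rewrite normrZ nxi mulVf ?lt0r_neq0 // lexx.
rewrite dualZ // normrM nxi => /(_ isT).
by rewrite ler_pdivrMl // mulrC.
Qed.

Lemma dnorm_le phi k : (forall x, `|x| <= 1 -> `|phi x| <= k) -> dnorm phi <= k.
Proof. by move=> h; apply: ge_sup; [exact: dset_ne|move=> _ [x x1 <-]; exact: h]. Qed.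

Lemma dnorm_le' phi k : 0 <= k -> (forall x, `|phi x| <= k * `|x|) ->
  dnorm phi <= k.
Proof.
move=> k0 h; apply: dnorm_le => x x1; apply: (le_trans (h x)).
by rewrite ler_piMr.
Qed.

Lemma dual_lin a {phi psi} : is_dual phi -> is_dual psi ->
  is_dual (fun u => a * phi u + psi u).
Proof.
move=> hp hq; have [M M0 hM] := dual_bound hp; have [N N0 hN] := dual_bound hq.
apply: (@bound_cont _ (`|a| * M + N)).
  move=> b x y; rewrite hp.1 hq.1; ring.
move=> x; rewrite (le_trans (ler_normD _ _)) // normrM mulrDl -mulrA lerD //.
by rewrite ler_wpM2l.
Qed.

Lemma dual_zero : is_dual (fun _ : E => 0 : R).
Proof. by apply: (@bound_cont _ 0) => [a x y|x]; rewrite ?normr0 ?mul0r; [ring|]. Qed.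

Lemma dnorm_zero : dnorm (fun _ : E => 0 : R) = 0.
Proof.
apply/eqP; rewrite eq_le; apply/andP; split; last exact: dnorm_ge0 dual_zero.
by apply: dnorm_le => x _; rewrite normr0.
Qed.

Lemma dnormZ a phi : is_dual phi -> dnorm (fun u => a * phi u) <= `|a| * dnorm phi.
Proof.
move=> hd; apply: dnorm_le => x x1; rewrite normrM ler_wpM2l //.
exact: dnorm_ub.
Qed.

Lemma dnormD phi psi : is_dual phi -> is_dual psi ->
  dnorm (fun u => phi u + psi u) <= dnorm phi + dnorm psi.
Proof.
move=> hp hq; apply: dnorm_le => x x1.
by rewrite (le_trans (ler_normD _ _)) // lerD // dnorm_ub.
Qed.


Lemma dual_ext {phi} psi : is_dual phi -> (forall x, psi x = phi x) -> is_dual psi.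
Proof. by move=> hd h; have -> : psi = phi by apply/funext. Qed.

Lemma dual_scale a {phi} : is_dual phi -> is_dual (fun u => a * phi u).
Proof.
move=> hd; apply: (dual_ext _ (dual_lin a hd dual_zero)) => x; by rewrite addr0.
Qed.

Lemma bidual_lin {z a phi psi chi} : is_bidual z -> is_dual phi -> is_dual psi ->
  (forall x, chi x = a * phi x + psi x) -> z chi = a * z phi + z psi.
Proof.
move=> hz hp hq h; have -> : chi = (fun x => a * phi x + psi x) by apply/funext.
exact: hz.1.
Qed.

Lemma bid0 z : is_bidual z -> z (fun _ => 0) = 0.
Proof.
move=> hz; have h : z (fun _ => 0) = 1 * z (fun _ => 0) + z (fun _ => 0).
  by apply: (bidual_lin hz dual_zero dual_zero) => x; rewrite mul1r addr0.
lra.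
Qed.

Lemma bidZ {z a phi chi} : is_bidual z -> is_dual phi ->
  (forall x, chi x = a * phi x) -> z chi = a * z phi.
Proof.
move=> hz hp h; rewrite (@bidual_lin z a phi (fun _ => 0) chi hz hp dual_zero).
  by rewrite bid0 // addr0.
by move=> x; rewrite addr0.
Qed.

Lemma bset_ne z : [set `|z phi| | phi in [set phi : E -> R | is_dual phi /\ dnorm phi <= 1]] !=set0.
Proof. by exists `|z (fun _ => 0)|, (fun _ => 0) => //; split; [exact: dual_zero | rewrite dnorm_zero]. Qed.

Lemma bnorm_bound {z phi} : is_bidual z -> is_dual phi ->
  `|z phi| <= bnorm z * dnorm phi.
Proof.
move=> hz hp; have [M hM] := hz.2.
have ub : has_ubound [set `|z phi| | phi in [set phi : E -> R | is_dual phi /\ dnorm phi <= 1]].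
  exists `|M| => _ [psi [hpsi d1] <-].
  apply: (le_trans (hM _ hpsi)); apply: (le_trans (ler_norm _)).
  rewrite normrM (ger0_norm (dnorm_ge0 hpsi)) ler_piMr //.
have d0 := dnorm_ge0 hp.
have [d00|dpos] := eqVneq (dnorm phi) 0.
  by have := hM _ hp; rewrite d00 !mulr0.
have dp : 0 < dnorm phi by rewrite lt0r dpos.
pose psi := fun u => (dnorm phi)^-1 * phi u.
have hpsi : is_dual psi := dual_scale _ hp.
have dpsi : dnorm psi <= 1.
  apply: (le_trans (dnormZ _ _ hp)).
  by rewrite ger0_norm ?invr_ge0 // mulVf.
have := ub_le_sup ub (ex_intro2 _ _ psi (conj hpsi dpsi) erefl).
rewrite (bidZ (a := (dnorm phi)^-1) hz hp) // normrM ger0_norm ?invr_ge0 //.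
by rewrite ler_pdivrMl // mulrC.
Qed.

Lemma bnorm_ge0 z : is_bidual z -> 0 <= bnorm z.
Proof.
move=> hz; have [M hM] := hz.2.
have ub : has_ubound [set `|z phi| | phi in [set phi : E -> R | is_dual phi /\ dnorm phi <= 1]].
  exists `|M| => _ [psi [hpsi d1] <-].
  apply: (le_trans (hM _ hpsi)); apply: (le_trans (ler_norm _)).
  by rewrite normrM (ger0_norm (dnorm_ge0 hpsi)) ler_piMr.
apply: (le_trans (normr_ge0 (z (fun _ => 0)))).
apply: (ub_le_sup ub); exists (fun _ => 0) => //.
by split; [exact: dual_zero | rewrite dnorm_zero].
Qed.

End Duals.

Section SepE.
Context (R : realType) (E : normedModType R).
Local Notation V := (E * (E -> R) * R^o * R^o)%type.

Lemma Vcomp (a : R) (p q : V) : a *: p + q =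
  (a *: p.1.1.1 + q.1.1.1, (fun w => a * p.1.1.2 w + q.1.1.2 w),
   a * p.1.2 + q.1.2, a * p.2 + q.2).
Proof. by case: p => [[[x phi] r] s]; case: q => [[[y psi] r'] s']. Qed.


Lemma Vcomp2 (a b : R) (p q : V) : a *: p + b *: q =
  (a *: p.1.1.1 + b *: q.1.1.1, (fun w => a * p.1.1.2 w + b * q.1.1.2 w),
   a * p.1.2 + b * q.1.2, a * p.2 + b * q.2).
Proof. by case: p => [[[x phi] r] s]; case: q => [[[y psi] r'] s']. Qed.

Lemma VZ (a : R) (p : V) : a *: p =
  (a *: p.1.1.1, (fun w => a * p.1.1.2 w), a * p.1.2, a * p.2).
Proof. by case: p => [[[x phi] r] s]. Qed.

Lemma VD (p q : V) : p + q =
  (p.1.1.1 + q.1.1.1, (fun w => p.1.1.2 w + q.1.1.2 w), p.1.2 + q.1.2, p.2 + q.2).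
Proof. by case: p => [[[x phi] r] s]; case: q => [[[y psi] r'] s']. Qed.

Lemma lin0 (T : lmodType R) (f : T -> R) :
  (forall a x y, f (a *: x + y) = a * f x + f y) -> f 0 = 0.
Proof. by move=> lin; have := lin 1 0 0; rewrite scale1r addr0 mul1r => h; lra. Qed.

Lemma sepE (f0 : E -> (E -> R) -> \bar R) (hprop : proper_fun f0) (hconv : convex_fun f0)
  (x0 : E) (phi0 : E -> R) (r0 : R) (zeta : E -> R) (c k1 k2 k3 k4 : R) :
  is_dual phi0 -> is_dual zeta -> 0 < k1 -> 0 < k2 -> 0 < k3 -> 0 < k4 ->
  (forall x phi r, is_dual phi -> (f0 x phi <= r%:E)%E -> `|x - x0| < k1 ->
     dnorm (fun w => phi w - phi0 w) < k2 -> `|r - r0| < k3 ->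
     `|zeta x - c| < k4 -> False) ->
  exists (u : E -> R) (v : (E -> R) -> R) (beta gam : R),
   [/\ is_dual u, forall x, `|u x| <= `|x| / k1,
       (forall a phi psi, is_dual phi -> is_dual psi ->
         v (fun x => a * phi x + psi x) = a * v phi + v psi) /\
       (forall phi, is_dual phi -> `|v phi| <= dnorm phi / k2),
       0 <= beta &
       forall x phi a, is_dual phi -> f0 x phi = a%:E ->
          1 <= u (x - x0) + v (fun w => phi w - phi0 w) + beta * (a - r0)
               + gam * (zeta x - c)].
Proof.
move=> dphi0 dzeta k10 k20 k30 k40 disj.
pose S := [set p : V | is_dual p.1.1.2].
pose N := fun p : V => `|p.1.1.1| / k1 + dnorm p.1.1.2 / k2 + `|p.1.2| / k3
                       + `|p.2| / k4.
pose K := [set p : V | exists x phi r, [/\ is_dual phi, (f0 x phi <= r%:E)%E &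
   p = (x - x0, (fun w => phi w - phi0 w), r - r0, zeta x - c)]].
have S0 : S 0 by exact: dual_zero.
have Slin : forall a v w, S v -> S w -> S (a *: v + w).
  by move=> a v w; rewrite /S /= => Sv Sw; exact: (dual_lin a Sv Sw).
have N0 : forall p, S p -> 0 <= N p.
  move=> p; rewrite /S /= => Sp; rewrite /N.
  have t1 : 0 <= `|p.1.1.1| / k1 by rewrite divr_ge0 // ltW.
  have t2 : 0 <= dnorm p.1.1.2 / k2 by apply: divr_ge0; [exact: dnorm_ge0 Sp | exact: ltW].
  have t3 : 0 <= `|p.1.2| / k3 by rewrite divr_ge0 // ltW.
  have t4 : 0 <= `|p.2| / k4 by rewrite divr_ge0 // ltW.
  lra.
have NZ : forall a p, S p -> N (a *: p) <= `|a| * N p.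
  move=> a p; rewrite /S /= => Sp; rewrite VZ /N /= normrZ !normrM !mulrDr !mulrA.
  apply: lerD => //; apply: lerD => //; apply: lerD => //.
  by rewrite ler_pM2r ?invr_gt0 //; exact: dnormZ.
have ND : forall p q, S p -> S q -> N (p + q) <= N p + N q.
  move=> p q; rewrite /S /= => Sp Sq; rewrite VD /N /=.
  have h1 : `|p.1.1.1 + q.1.1.1| / k1 <= `|p.1.1.1| / k1 + `|q.1.1.1| / k1.
    by rewrite -mulrDl ler_pM2r ?invr_gt0 // ler_normD.
  have h2 : dnorm (fun w => p.1.1.2 w + q.1.1.2 w) / k2 <=
            dnorm p.1.1.2 / k2 + dnorm q.1.1.2 / k2.
    by rewrite -mulrDl ler_pM2r ?invr_gt0 //; exact: dnormD.
  have h3 : `|p.1.2 + q.1.2| / k3 <= `|p.1.2| / k3 + `|q.1.2| / k3.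
    by rewrite -mulrDl ler_pM2r ?invr_gt0 // ler_normD.
  have h4 : `|p.2 + q.2| / k4 <= `|p.2| / k4 + `|q.2| / k4.
    by rewrite -mulrDl ler_pM2r ?invr_gt0 // ler_normD.
  lra.
have dsub phi : is_dual phi -> is_dual (fun w => phi w - phi0 w).
  move=> dphi; apply: (dual_ext _ (dual_lin (-1) dphi0 dphi)) => w.
  by rewrite mulN1r addrC.
have KS : K `<=` S by move=> _ [x [phi [r [dphi _ ->]]]]; exact: dsub.
have Kconv : forall a b t, K a -> K b -> 0 <= t <= 1 ->
    K (t *: a + (1 - t) *: b).
  move=> _ _ t [x1 [phi1 [r1 [d1 f1 ->]]]] [x2 [phi2 [r2 [d2 f2 ->]]]] t01.
  have /andP[t0 t1] := t01.
  exists (t *: x1 + (1 - t) *: x2), (fun w => t * phi1 w + (1 - t) * phi2 w),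
    (t * r1 + (1 - t) * r2); split.
  - exact: (dual_lin t d1 (dual_scale (1 - t) d2)).
  - apply: (le_trans (hconv x1 phi1 x2 phi2 t d1 d2 t01)).
    have -> : ((t * r1 + (1 - t) * r2)%:E = t%:E * r1%:E + (1 - t)%:E * r2%:E)%E by rewrite EFinD !EFinM.
    apply: leeD; apply: lee_wpmul2l => //.
    by rewrite lee_fin subr_ge0.
  - rewrite Vcomp2 /=; congr (_, _, _, _).
    + rewrite !scalerBr addrACA -opprD -scalerDl subrKC scale1r //.
    + by apply/funext => w; ring.
    + by ring.
    + rewrite (dzeta.1 t x1) (dualZ _ _ _ dzeta); ring.
have Kne : exists a, K a.
  have [x [phi [dphi fne]]] := hprop.2; have fnm := hprop.1 x phi dphi.
  case Ef: (f0 x phi) fne fnm => [a| |] // _ _.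
  by exists (x - x0, (fun w => phi w - phi0 w), a - r0, zeta x - c), x, phi, a;
    rewrite Ef.
have KN : forall p, K p -> 1 <= N p.
  move=> _ [x [phi [r [dphi fr ->]]]]; rewrite /N /=.
  rewrite leNgt; apply/negP => lt1.
  have t1 : 0 <= `|x - x0| / k1 by rewrite divr_ge0 // ltW.
  have t2 : 0 <= dnorm (fun w => phi w - phi0 w) / k2.
    by apply: divr_ge0; [exact: dnorm_ge0 (dsub _ dphi) | exact: ltW].
  have t3 : 0 <= `|r - r0| / k3 by rewrite divr_ge0 // ltW.
  have t4 : 0 <= `|zeta x - c| / k4 by rewrite divr_ge0 // ltW.
  apply: (disj x phi r dphi fr).
  - by rewrite -[k1]mul1r -ltr_pdivrMr //; lra.
  - by rewrite -[k2]mul1r -ltr_pdivrMr //; lra.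
  - by rewrite -[k3]mul1r -ltr_pdivrMr //; lra.
  - by rewrite -[k4]mul1r -ltr_pdivrMr //; lra.
have [L [Llin LN LK]] := @separation R V S N K S0 Slin N0 NZ ND KS Kconv Kne KN.
pose z0 := (fun _ : E => 0 : R).
have dz0 : is_dual z0 := dual_zero.
pose u := fun x : E => L ((x, z0, 0, 0) : V).
pose v := fun phi : E -> R => L ((0, phi, 0, 0) : V).
pose beta := L ((0, z0, 1, 0) : V).
pose gam := L ((0, z0, 0, 1) : V).
have L0 : L 0 = 0.
  by have := Llin 1 0 0 S0 S0; rewrite scale1r addr0 mul1r => h; lra.
have Ldec x phi r s : is_dual phi ->
    L ((x, phi, r, s) : V) = u x + v phi + beta * r + gam * s.
  move=> dphi.
  have -> : ((x, phi, r, s) : V) = 1 *: ((x, z0, 0, 0) : V) + (0, phi, r, s).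
    rewrite Vcomp /=; congr (_, _, _, _).
    - by rewrite scale1r addr0.
    - by apply/funext => w; rewrite /z0 mulr0 add0r.
    - by rewrite mulr0 add0r.
    - by rewrite mulr0 add0r.
  rewrite (Llin 1 ((x, z0, 0, 0) : V) ((0, phi, r, s) : V) dz0 dphi).
  have -> : ((0, phi, r, s) : V) = 1 *: ((0, phi, 0, 0) : V) + (0, z0, r, s).
    rewrite Vcomp /=; congr (_, _, _, _).
    - by rewrite scale1r addr0.
    - by apply/funext => w; rewrite /z0 mul1r addr0.
    - by rewrite mulr0 add0r.
    - by rewrite mulr0 add0r.
  rewrite (Llin 1 ((0, phi, 0, 0) : V) ((0, z0, r, s) : V) dphi dz0).
  have -> : ((0, z0, r, s) : V) = r *: ((0, z0, 1, 0) : V) + (0, z0, 0, s).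
    rewrite Vcomp /=; congr (_, _, _, _).
    - by rewrite scaler0 addr0.
    - by apply/funext => w; rewrite /z0 mulr0 addr0.
    - by rewrite mulr1 addr0.
    - by rewrite mulr0 add0r.
  rewrite (Llin r ((0, z0, 1, 0) : V) ((0, z0, 0, s) : V) dz0 dz0).
  have -> : ((0, z0, 0, s) : V) = s *: ((0, z0, 0, 1) : V) + 0.
    rewrite addr0 VZ /=; congr (_, _, _, _).
    - by rewrite scaler0.
    - by apply/funext => w; rewrite /z0 mulr0.
    - by rewrite mulr0.
    - by rewrite mulr1.
  rewrite (Llin s ((0, z0, 0, 1) : V) 0 dz0 S0) L0 addr0 /u /v /beta /gam; lra.
have ulin a x y : u (a *: x + y) = a * u x + u y.
  rewrite /u -Llin //; congr L; rewrite Vcomp /=; congr (_, _, _, _).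
  - by apply/funext => w; rewrite /z0 mulr0 addr0.
  - by rewrite mulr0 addr0.
  - by rewrite mulr0 addr0.
have u0 : u 0 = 0 := @lin0 E u ulin.
have uN x : u (- x) = - u x.
  by have := ulin (-1) x 0; rewrite addr0 scaleN1r u0 addr0 mulN1r.
have Nx x : N ((x, z0, 0, 0) : V) = `|x| / k1.
  by rewrite /N /= dnorm_zero normr0 !mul0r !addr0.
have ubd x : `|u x| <= `|x| / k1.
  have h1 : u x <= _ := LN ((x, z0, 0, 0) : V) dz0; rewrite Nx in h1.
  have h2 := LN ((- x, z0, 0, 0) : V) dz0; rewrite Nx normrN in h2.
  change (L _) with (u (- x)) in h2; rewrite uN in h2.
  by rewrite ler_norml; apply/andP; split; lra.
have vlin a phi psi : is_dual phi -> is_dual psi ->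
    v (fun x => a * phi x + psi x) = a * v phi + v psi.
  move=> dphi dpsi; rewrite /v -Llin //; congr L; rewrite Vcomp /=.
  congr (_, _, _, _).
  - by rewrite scaler0 addr0.
  - by rewrite mulr0 addr0.
  - by rewrite mulr0 addr0.
have vz0 : v z0 = 0.
  have := vlin 1 _ _ dz0 dz0.
  have -> : (fun x => 1 * z0 x + z0 x) = z0 by apply/funext => w; rewrite /z0 /= mulr0 addr0.
  by rewrite mul1r => h; lra.
have vbd phi : is_dual phi -> `|v phi| <= dnorm phi / k2.
  move=> dphi.
  have Np psi : N ((0, psi, 0, 0) : V) = dnorm psi / k2.
    by rewrite /N /= !normr0 !mul0r add0r !addr0.
  have h1 : v phi <= _ := LN ((0, phi, 0, 0) : V) dphi; rewrite Np in h1.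
  have dm : is_dual (fun x => -1 * phi x + z0 x) := dual_lin (-1) dphi dz0.
  have h2 := LN ((0, (fun x => -1 * phi x + z0 x), 0, 0) : V) dm.
  rewrite Np in h2; change (L _) with (v (fun x => -1 * phi x + z0 x)) in h2.
  rewrite vlin // vz0 addr0 in h2.
  have : dnorm (fun x => -1 * phi x + z0 x) <= dnorm phi.
    have -> : (fun x => -1 * phi x + z0 x) = (fun x => -1 * phi x).
      by apply/funext => w; rewrite /z0 addr0.
    by apply: (le_trans (dnormZ _ _ dphi)); rewrite normrN normr1 mul1r.
  move=> hd; have : dnorm (fun x => -1 * phi x + z0 x) / k2 <= dnorm phi / k2.
    by rewrite ler_pM2r // invr_gt0.
  by move=> hd'; rewrite ler_norml; apply/andP; split; lra.
have udual : is_dual u.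
  by apply: (@bound_cont _ _ u (k1^-1) ulin) => x; rewrite mulrC.
have Kp x phi a : is_dual phi -> f0 x phi = a%:E ->
    K ((x - x0, (fun w => phi w - phi0 w), a - r0, zeta x - c) : V).
  by move=> dphi fa; exists x, phi, a; split => //; rewrite fa.
have key x phi a : is_dual phi -> f0 x phi = a%:E ->
    1 <= u (x - x0) + v (fun w => phi w - phi0 w) + beta * (a - r0)
         + gam * (zeta x - c).
  by move=> dphi fa; have := LK _ (Kp x phi a dphi fa); rewrite Ldec //; exact: dsub.
exists u, v, beta, gam; split => //.
have [_ [x [phi [a [dphi fa _]]]]] := Kne.
pose Q := u (x - x0) + v (fun w => phi w - phi0 w) + gam * (zeta x - c).
have hr t : 0 <= t -> 1 <= Q + beta * (a + t - r0).
  move=> t0.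
  have Kt : K ((x - x0, (fun w => phi w - phi0 w), a + t - r0, zeta x - c) : V).
    exists x, phi, (a + t); split => //.
    by apply: (le_trans fa); rewrite lee_fin lerDl.
  have := LK _ Kt; rewrite Ldec; last exact: dsub.
  rewrite /Q; lra.
rewrite leNgt; apply/negP => bneg.
pose W := Q + beta * (a - r0).
have nb : 0 < - beta by rewrite oppr_gt0.
pose t := (`|W| + 1) / (- beta).
have t0 : 0 <= t by rewrite /t divr_ge0 // ?ltW // addr_ge0.
have := hr t t0.
have -> : Q + beta * (a + t - r0) = W - (- beta) * t by rewrite /W; ring.
rewrite /t mulrC mulfVK ?lt0r_neq0 //.
have := ler_norm W; lra.
Qed.

End SepE.


Section Final.
Context {R : realType} {E : normedModType R}.

Lemma fconj_le (f : E -> (E -> R) -> \bar R) ys yss (B : R) :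
  (forall x phi, is_dual phi -> f x phi != -oo%E) ->
  (forall x phi a, is_dual phi -> f x phi = a%:E -> ys x + yss phi - a <= B) ->
  (fconj f ys yss <= B%:E)%E.
Proof.
move=> fnm h; apply: ge_ereal_sup => _ [x [phi [dphi ->]]].
case Ef: (f x phi) => [a| |].
- by rewrite -EFinB lee_fin; exact: h.
- by rewrite addeNy leNye.
- by have := fnm x phi dphi; rewrite Ef.
Qed.

Lemma hyp_use (f : E -> (E -> R) -> \bar R) (zss : (E -> R) -> R) (ys : E -> R)
  (yss : (E -> R) -> R) (B : R) :
  (fbiconj f zss (fun _ => 0%R) <= 0)%E -> is_dual ys -> is_bidual yss ->
  (fconj f ys yss <= B%:E)%E -> zss ys <= B.
Proof.
move=> hb dys dyss hB.
have : (((zss ys + 0)%:E - fconj f ys yss) <= 0)%E.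
  apply: le_trans hb; apply: ereal_sup_ubound; exists ys, yss; split => //.
case Ef: (fconj f ys yss) hB => [F| |] //=.
- by rewrite addr0 -EFinB !lee_fin subr_le0 => FB /le_trans; apply.
Qed.

End Final.

Theorem lemma7p2 (R : realType) (E : completeNormedModType R)
  (f0 : E -> (E -> R) -> \bar R) (zss : (E -> R) -> R) (zs : E -> R) :
  (exists x : E, x != 0) ->
  proper_fun f0 -> convex_fun f0 -> lsc_fun f0 ->
  is_bidual zss -> (fbiconj f0 zss (fun _ => 0%R) <= 0)%E ->
  is_dual zs ->
  forall n : nat, (0 < n)%N ->
    exists (x : E) (xs : E -> R), is_dual xs /\
      (f0 x xs <= (1 / (n%:R ^+ 2))%:E)%E /\
      `|x| <= bnorm zss + 1 / (n%:R ^+ 2) /\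
      dnorm xs <= 1 / (n%:R ^+ 2) /\
      `|zs x - zss zs| <= 1 / (n%:R ^+ 2).
Proof.
move=> _ hprop hconv hlsc hzss hbi dzs n n0.
have e0 : 0 < 1 / (n%:R ^+ 2) :> R.
  by rewrite divr_gt0 // exprn_gt0 // ltr0n.
set eps := 1 / (n%:R ^+ 2).
set K := bnorm zss.
set c := zss zs.
have K0 : 0 <= K := bnorm_ge0 zss hzss.
have Ke0 : 0 < K + eps by rewrite ltr_wpDl.
apply: contrapT => H.
have disj1 : forall x phi r, is_dual phi -> (f0 x phi <= r%:E)%E -> `|x - 0| < K + eps ->
     dnorm (fun w => phi w - (fun _ => 0) w) < eps -> `|r - 0| < eps ->
     `|zs x - c| < eps -> False.
  move=> x phi r dphi fr hx hphi hr hz; apply: H; exists x, phi; split => //.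
  split; first by apply: (le_trans fr); rewrite lee_fin; move: hr;
    rewrite subr0 => /ltW; apply: le_trans; exact: ler_norm.
  split; first by rewrite subr0 in hx; exact: ltW.
  split; last exact: ltW.
  have -> : phi = (fun w => phi w - (fun _ => 0) w) by apply/funext => w; rewrite subr0.
  exact: ltW.
have [u [v [beta [gam [du ub [vlin vb] b0 key1]]]]] :=
  @sepE R E f0 hprop hconv 0 (fun _ => 0) 0 zs c (K + eps) eps eps eps
    dual_zero dzs Ke0 e0 e0 e0 disj1.
have key1' x phi a : is_dual phi -> f0 x phi = a%:E ->
    1 <= u x + v phi + beta * a + gam * (zs x - c).
  move=> dphi fa; have := key1 x phi a dphi fa.
  have -> : (fun w => phi w - (fun _ => 0) w) = phi by apply/funext => w; rewrite subr0.
  by rewrite !subr0.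
have [x0 [phi0 [dphi0 fne]]] := hprop.2.
have fnm0 := hprop.1 x0 phi0 dphi0.
case Ef0: (f0 x0 phi0) fne fnm0 => [a0| |] // _ _.
have [d d0 hd] : exists2 d : R, 0 < d & forall (y : E) psi, is_dual psi ->
    `|y - x0| < d -> dnorm (fun u => psi u - phi0 u) < d ->
    ((a0 - 1)%:E < f0 y psi)%E.
  by apply: (hlsc x0 phi0 dphi0 (a0 - 1)); rewrite Ef0 lte_fin ltrBlDr ltrDl.
have disj2 : forall (x : E) (phi : E -> R) (r : R), is_dual phi -> (f0 x phi <= r%:E)%E -> `|x - x0| < d ->
     dnorm (fun w => phi w - phi0 w) < d -> `|r - (a0 - 2)| < 1 ->
     `|(fun _ : E => 0 : R) x - 0| < 1 -> False.
  move=> x phi r dphi fr hx hphi hr _.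
  have := lt_le_trans (hd x phi dphi hx hphi) fr; rewrite lte_fin.
  have := ler_norm (r - (a0 - 2)); lra.
have [u2 [v2 [beta2 [gam2 [du2 ub2 [vlin2 vb2] b20 key2]]]]] :=
  @sepE R E f0 hprop hconv x0 phi0 (a0 - 2) (fun _ => 0) 0 d d 1 1
    dphi0 dual_zero d0 d0 ltr01 ltr01 disj2.
have v2z : v2 (fun _ => 0) = 0.
  have := vb2 _ dual_zero; rewrite dnorm_zero mul0r normr_le0 => /eqP //.
have v2B phi : is_dual phi -> v2 (fun w => phi w - phi0 w) = v2 phi - v2 phi0.
  move=> dphi; have := vlin2 (-1) _ _ dphi0 dphi.
  have -> : (fun x => -1 * phi0 x + phi x) = (fun w => phi w - phi0 w).
    by apply/funext => w; rewrite mulN1r addrC.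
  by move=> ->; rewrite mulN1r addrC.
have key2' x phi a : is_dual phi -> f0 x phi = a%:E ->
    1 <= u2 x - u2 x0 + v2 phi - v2 phi0 + beta2 * (a - (a0 - 2)).
  move=> dphi fa; have := key2 x phi a dphi fa.
  by rewrite dualB // v2B // subrr mulr0 addr0 addrA.
have b2 : 1 <= 2 * beta2.
  have := key2' x0 phi0 a0 dphi0 Ef0.
  have -> : a0 - (a0 - 2) = 2 by ring.
  by rewrite subrr add0r subrr add0r mulrC.
have b2p : 0 < beta2 by lra.
have zu : zss u <= K / (K + eps).
  have h := bnorm_bound hzss du.
  have du' : dnorm u <= (K + eps)^-1.
    apply: dnorm_le'; first by rewrite invr_ge0 ltW.
    by move=> x; rewrite mulrC; exact: ub.
  apply: (le_trans (ler_norm _)); apply: (le_trans h).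
  by rewrite ler_wpM2l.
pose rho := 1 - K / (K + eps).
have rho0 : 0 < rho.
  by rewrite /rho subr_gt0 ltr_pdivrMr // mul1r ltrDl.
pose C0 := -1 - u2 x0 - v2 phi0 - beta2 * (a0 - 2) + zss u2.
pose T := (`|C0| + 1) / rho.
have T0 : 0 <= T by rewrite /T divr_ge0 // ?ltW // addr_ge0.
pose D := beta2 + T * beta.
have D0 : 0 < D by have := mulr_ge0 T0 b0; rewrite /D; lra.
have Dn0 : D != 0 by exact: lt0r_neq0.
pose ys := fun x => (-1 / D) * u2 x + ((- T / D) * u x + (- T * gam / D) * zs x).
pose yss := fun phi : E -> R => (-1 / D) * v2 phi + (- T / D) * v phi.
have dys : is_dual ys.
  exact: (dual_lin _ du2 (dual_lin _ du (dual_scale _ dzs))).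
have dyss : is_bidual yss.
  split.
    move=> a phi psi dphi dpsi; rewrite /yss vlin2 // vlin //; ring.
  exists (`|-1 / D| / d + `|- T / D| / eps) => phi dphi.
  have h1 : `|(-1 / D) * v2 phi| <= `|-1 / D| * (dnorm phi / d).
    by rewrite normrM ler_wpM2l // vb2.
  have h2 : `|(- T / D) * v phi| <= `|- T / D| * (dnorm phi / eps).
    by rewrite normrM ler_wpM2l // vb.
  have -> : (`|-1 / D| / d + `|- T / D| / eps) * dnorm phi =
     `|-1 / D| * (dnorm phi / d) + `|- T / D| * (dnorm phi / eps) by ring.
  apply: (le_trans (ler_normD _ _)); lra.
pose B0 := -1 - T - u2 x0 - v2 phi0 - beta2 * (a0 - 2) - T * gam * c.
have hfc : (fconj f0 ys yss <= (B0 / D)%:E)%E.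
  apply: fconj_le; first exact: hprop.1.
  move=> x phi a dphi fa.
  have k1 := key1' x phi a dphi fa.
  have k2 := key2' x phi a dphi fa.
  have k1T := ler_wpM2l T0 k1.
  have -> : ys x + yss phi - a =
      (- u2 x - T * u x - T * gam * zs x - v2 phi - T * v phi - D * a) / D.
    by rewrite /ys /yss; field.
  rewrite ler_pM2r ?invr_gt0 // /B0 /D.
  rewrite !mulrDr mulr1 in k1T.
  rewrite /c in k1T *; lra.
have hz := @hyp_use _ _ f0 zss ys yss _ hbi dys dyss hfc.
have Ezs : zss ys = (-1 / D) * zss u2 + ((- T / D) * zss u + (- T * gam / D) * c).
  rewrite (@bidual_lin _ _ zss (-1 / D) u2
    (fun x => (- T / D) * u x + (- T * gam / D) * zs x) ys hzss du2
    (dual_lin _ du (dual_scale _ dzs)) (fun x => erefl)).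
  rewrite (@bidual_lin _ _ zss (- T / D) u (fun x => (- T * gam / D) * zs x) _
    hzss du (dual_scale _ dzs) (fun x => erefl)).
  by rewrite (@bidZ _ _ zss (- T * gam / D) zs _ hzss dzs (fun x => erefl)).
rewrite Ezs in hz.
have : (-1 / D) * zss u2 + ((- T / D) * zss u + (- T * gam / D) * c) =
    (- zss u2 - T * zss u - T * gam * c) / D by field.
move=> e; rewrite e ler_pM2r ?invr_gt0 // /B0 in hz.
have hT : T * rho = `|C0| + 1 by rewrite /T mulfVK ?lt0r_neq0.
have h3 : T * rho <= T * (1 - zss u).
  by rewrite ler_wpM2l // /rho lerD2l lerN2.
have := ler_norm C0; rewrite /C0 in hT *; lra.
Qed.
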